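(* Let $q$ be a prime power and let $M$ be a $2\times 2$ matrix over $\mathbb{F}_{q^2}$ having a unique eigenvalue $c$, whose eigenspace is one-dimensional and generated by an eigenvector $u\in\mathbb{F}_{q^2}^2$ with $\langle u,u\rangle\neq 0$. Then $0\notin\mathrm{Num}'_0(M)$. If $q$ is even, then $\mathrm{Num}'_0(M)=\mathbb{F}_{q^2}^*$. If $q$ is odd, then $\sharp(\mathrm{Num}'_0(M))=(q^2-1)/2$.
   Context: The Hermitian form on $\mathbb{F}_{q^2}^n$ is $\langle u,v\rangle=\sum_i u_i^q v_i$. For an $n\times n$ matrix $M$ over $\mathbb{F}_{q^2}$ with $n\ge 2$, $\mathrm{Num}'_0(M)=\{\langle u,Mu\rangle: u\in\mathbb{F}_{q^2}^n\setminus\{0\},\ \langle u,u\rangle=0\}$. *)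

(* Defs.v *)
From HB Require Import structures.
From mathcomp Require Import all_boot all_order all_algebra all_field.
Set Implicit Arguments. Unset Strict Implicit. Unset Printing Implicit Defensive.
Import GRing.Theory.
Local Open Scope ring_scope.

(* Hermitian form on F^n (column vectors), F = F_{q^2}: <u,v> = sum_i u_i^q v_i *)
Definition herm (F : finFieldType) (q n : nat) (u v : 'cV[F]_n) : F :=
  \sum_(i < n) (u i 0) ^+ q * v i 0.

Definition Num0 (F : finFieldType) (q n : nat) (M : 'M[F]_n) : {set F} :=
  [set x | [exists u : 'cV[F]_n,
      [&& u != 0, herm q u u == 0 & herm q u (M *m u) == x]]].

Definition is_eigenvalue (F : fieldType) (n : nat) (M : 'M[F]_n) (c : F) : Prop :=
  exists2 v : 'cV[F]_n, v != 0 & M *m v = c *: v.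

(* Main.v *)
Require Import Defs.
From HB Require Import structures.
From mathcomp Require Import all_boot all_order all_algebra all_field all_fingroup all_solvable.
From mathcomp Require Import ring zify.
Import GRing.Theory.
Local Open Scope ring_scope.

Lemma Ppnat_q (F : finFieldType) (q p k : nat) : prime p -> (0 < k)%N -> q = (p ^ k)%N ->
  #|F| = (q ^ 2)%N -> p \in [pchar F] /\ [pchar F].-nat q.
Proof.
move=> pp k0 qe hF.
have pc : p \in [pchar F].
  apply: (@card_finPcharP F p (k * 2)) => //; by rewrite hF qe expnM.
split => //; rewrite qe pnatX (eq_pnat _ (pcharf_eq pc)) pnat_id //.
Qed.

Lemma PfrobD (F : finFieldType) (q : nat) : [pchar F].-nat q -> forall x y : F, (x + y) ^+ q = x ^+ q + y ^+ q.
Proof. by move=> h x y; apply: exprDn_pchar. Qed.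

Lemma PfrobK (F : finFieldType) (q : nat) : #|F| = (q ^ 2)%N -> forall x : F, x ^+ q ^+ q = x.
Proof. by move=> hF x; rewrite -exprM mulnn -hF expf_card. Qed.

Lemma Pherm2 (F : finFieldType) q (x y : 'cV[F]_2) : herm q x y = x 0 0 ^+ q * y 0 0 + x 1 0 ^+ q * y 1 0.
Proof.
rewrite /herm !big_ord_recl big_ord0 addr0 /=.
by have -> : lift ord0 ord0 = 1 :> 'I_2 by apply: val_inj.
Qed.

Lemma PhermDr (F : finFieldType) q n (x y z : 'cV[F]_n) a b :
  herm q x (a *: y + b *: z) = a * herm q x y + b * herm q x z.
Proof.
rewrite /herm !mulr_sumr -big_split; apply: eq_bigr => i _; rewrite !mxE /=; ring.
Qed.

Lemma PhermDl (F : finFieldType) q n (x y z : 'cV[F]_n) a b : [pchar F].-nat q ->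
  herm q (a *: y + b *: z) x = a ^+ q * herm q y x + b ^+ q * herm q z x.
Proof.
move=> h; rewrite /herm !mulr_sumr -big_split; apply: eq_bigr => i _; rewrite !mxE.
rewrite /= PfrobD // !exprMn; ring.
Qed.

Lemma PhermC (F : finFieldType) q n (x y : 'cV[F]_n) : [pchar F].-nat q -> #|F| = (q ^ 2)%N -> (0 < q)%N ->
  herm q y x = (herm q x y) ^+ q.
Proof.
move=> h hF q0; rewrite /herm.
rewrite (big_morph (fun t : F => t ^+ q) (@PfrobD F q h) (expr0n _ _)) /= ?eqn0Ngt ?q0 //.
by apply: eq_bigr => i _; rewrite exprMn PfrobK // mulrC.
Qed.

Set Implicit Arguments. Unset Strict Implicit.

Lemma PfrobN (F : finFieldType) (q : nat) : [pchar F].-nat q -> (0 < q)%N -> forall x : F, (- x) ^+ q = - x ^+ q.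
Proof.
move=> h q0 x; apply/eqP; rewrite -subr_eq0 opprK -PfrobD // addNr expr0n; case: q q0 {h} => //.
Qed.

Lemma PhermZr (F : finFieldType) q n (x y : 'cV[F]_n) a : herm q x (a *: y) = a * herm q x y.
Proof. by rewrite /herm mulr_sumr; apply: eq_bigr => i _; rewrite !mxE; ring. Qed.

Lemma Pord2_cases (i : 'I_2) : i = 0 \/ i = 1.
Proof. by case: i => [[|[|k]]] Hi; [left|right|]; try apply: val_inj. Qed.

Lemma Pherm0 (F : finFieldType) q n (x : 'cV[F]_n) : herm q x 0 = 0.
Proof. by rewrite /herm big1 // => i _; rewrite mxE mulr0. Qed.

Definition Tq (F : finFieldType) (q : nat) (z : F) : bool :=
  [exists a : F, exists b : F,
     [&& (a != 0) || (b != 0), a ^+ q * a + b ^+ q * b == 0 & z == a ^+ q * b]].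

Lemma Preduce (F : finFieldType) (q : nat)
  (h : [pchar F].-nat q) (hF : #|F| = (q ^ 2)%N) (q0 : (0 < q)%N)
  (M : 'M[F]_2) (c : F) (u : 'cV[F]_2)
  (huniq : forall a : F, is_eigenvalue M a <-> a = c)
  (hu0 : u != 0)
  (heig : forall v : 'cV[F]_2, M *m v = c *: v <-> exists a : F, v = a *: u)
  (hnorm : herm q u u != 0) :
  exists2 k : F, k != 0 & forall y, (y \in Num0 q M) = Tq q (y / k).
Proof.
set al := herm q u u.
pose v : 'cV[F]_2 := \col_(i < 2) (if i == 0 then - (u 1 0) ^+ q else (u 0 0) ^+ q).
have v0 : v 0 0 = - (u 1 0) ^+ q by rewrite mxE.
have v1 : v 1 0 = (u 0 0) ^+ q by rewrite mxE.
have huv : herm q u v = 0 by rewrite Pherm2 v0 v1; ring.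
have hvu : herm q v u = 0.
  rewrite (@PhermC F q 2 u v h hF q0) huv expr0n. by case: (q) q0.
have hvv : herm q v v = al by rewrite /al !Pherm2 v0 v1 PfrobN // !PfrobK //; ring.
have decomp : forall w : 'cV[F]_2, w = (herm q u w / al) *: u + (herm q v w / al) *: v.
  move=> w; apply/matrixP => i j; rewrite (ord1 j) !mxE.
  have hal : u 0 0 ^+ q * u 0 0 + u 1 0 ^+ q * u 1 0 != 0 by rewrite -Pherm2.
  rewrite /al !Pherm2 v0 v1 PfrobN // !PfrobK //.
  by case: (Pord2_cases i) => ->; rewrite ?v0 ?v1 /=; field.
have Mu : M *m u = c *: u by apply/heig; exists 1; rewrite scale1r.
have hv0 : v != 0.
  by apply/eqP => e; move: hnorm; rewrite -/al -hvv e /herm big1 ?eqxx // => i _; rewrite mxE mulr0.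
set a := herm q u (M *m v) / al.
set b := herm q v (M *m v) / al.
have Mv : M *m v = a *: u + b *: v by rewrite -decomp.
have bc : b = c.
  apply/(huniq b); case: (eqVneq b c) => [->|nbc]; first by exists u.
  pose t := a / (b - c).
  have bc0 : b - c != 0 by rewrite subr_eq0.
  exists (1 *: v + t *: u).
    apply/eqP => e; move: (hnorm); rewrite -/al -hvv.
    have := congr1 (herm q v) e; rewrite PhermDr hvu mulr0 addr0 mul1r => ->.
  by rewrite Pherm0 eqxx.
  rewrite mulmxDr -!scalemxAr Mv Mu; apply/matrixP => i j; rewrite !mxE /t; field.
  exact: bc0.
have a0 : a != 0.
  apply/eqP => a0; move: Mv; rewrite a0 scale0r add0r bc => /heig [s es].
  have : herm q u v = s * al by rewrite es PhermZr.
  rewrite huv => /esym /eqP; rewrite mulf_eq0 (negbTE hnorm) orbF => /eqP s0.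
  by move: hv0; rewrite es s0 scale0r eqxx.
have Hww : forall s r, herm q (s *: u + r *: v) (s *: u + r *: v) = (s ^+ q * s + r ^+ q * r) * al.
  move=> s r; rewrite PhermDl // !PhermDr huv hvu hvv. rewrite -/al; ring.
have HMw : forall s r, herm q (s *: u + r *: v) (M *m (s *: u + r *: v))
    = c * ((s ^+ q * s + r ^+ q * r) * al) + (a * al) * (s ^+ q * r).
  move=> s r; rewrite mulmxDr -!scalemxAr Mv Mu bc.
  have -> : s *: (c *: u) + r *: (a *: u + c *: v) = (s * c + r * a) *: u + (r * c) *: v.
    by apply/matrixP => i j; rewrite !mxE; ring.
  by rewrite PhermDl // !PhermDr huv hvu hvv -/al; ring.
have Hw0 : forall s r, s *: u + r *: v = 0 -> s = 0 /\ r = 0.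
  move=> s r e; have e1 := congr1 (herm q u) e; have e2 := congr1 (herm q v) e.
  move: e1 e2; rewrite !PhermDr huv hvu hvv !Pherm0 !mulr0 addr0 add0r.
  by move=> /eqP; rewrite mulf_eq0 (negbTE hnorm) orbF => /eqP -> /eqP; rewrite mulf_eq0 (negbTE hnorm) orbF => /eqP ->.
have k0 : a * al != 0 by rewrite mulf_neq0.
exists (a * al) => // y; rewrite inE; apply/existsP/existsP.
  move=> [w /and3P [w0 ww wM]].
  pose s := herm q u w / al; pose r := herm q v w / al.
  have ew : w = s *: u + r *: v by exact: decomp.
  exists s; apply/existsP; exists r; apply/and3P; split.
  - rewrite -negb_and; apply/negP => /andP [/eqP s0 /eqP r0]; move: w0; by rewrite ew s0 r0 !scale0r addr0 eqxx.
  - by move: ww; rewrite ew Hww mulf_eq0 (negbTE hnorm) orbF.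
  - move: wM ww; rewrite ew HMw Hww => /eqP <- /eqP ->; rewrite mulr0 add0r.
    by rewrite [_ * (s ^+ q * r)]mulrC mulfK.
move=> [s /existsP [r /and3P [nz /eqP N /eqP e]]].
exists (s *: u + r *: v); apply/and3P; split.
- apply/negP => /eqP /Hw0 [s0 r0]; move: nz; by rewrite s0 r0 eqxx.
- by rewrite Hww N mul0r.
- by rewrite HMw N mul0r mulr0 add0r -e mulrC divfK.
Qed.

Lemma PTq0 (F : finFieldType) q : (0 < q)%N -> Tq q (0 : F) = false.
Proof.
move=> q0; apply/negbTE/existsP => [[a /existsP [b /and3P [nz /eqP N /eqP e]]]].
move: e => /esym /eqP; rewrite mulf_eq0 expf_eq0 q0 /= => /orP [] /eqP H.
- have z0 : (0:F) ^+ q = 0 by rewrite expr0n eqn0Ngt q0 /= mulr0n.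
  move: N nz; rewrite H z0 mul0r add0r => /eqP.
  by rewrite mulf_eq0 expf_eq0 q0 /= orbb => /eqP ->; rewrite eqxx.
- move: N nz; rewrite H mulr0 addr0 => /eqP.
  by rewrite mulf_eq0 expf_eq0 q0 /= orbb => /eqP ->; rewrite eqxx.
Qed.

Lemma Punity (F : finFieldType) q : #|F| = (q ^ 2)%N -> forall z : F, z != 0 -> z ^+ (q ^ 2 - 1) = 1.
Proof.
move=> hF z nz; have := expf_card z; rewrite hF.
have hq2 : (q ^ 2 = (q ^ 2 - 1).+1)%N.
  have : (0 < q ^ 2)%N by rewrite -hF; apply/card_gt0P; exists 0.
  lia.
rewrite {1}hq2 exprS => e; apply: (mulfI nz); by rewrite mulr1.
Qed.

Lemma PTeven (F : finFieldType) q k : (2 \in [pchar F]) -> #|F| = (q ^ 2)%N ->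
  q = (2 * k + 2)%N -> forall z : F, z != 0 -> Tq q z.
Proof.
move=> h2 hF qe z nz.
have U := Punity hF nz.
have mE : (q ^ 2 - 1 = 4*k*k+8*k+3)%N.
  rewrite qe -mulnn; have -> : ((2*k+2) * (2*k+2) = (4*k*k+8*k+3).+1)%N by ring.
  by rewrite subn1.
rewrite mE in U.
pose x := (k.+1 + (2 * k + 1) * (k.+2))%N; pose w := k.+1.
apply/existsP; exists (z ^+ x); apply/existsP; exists (z ^+ w).
have e1 : (x * q + x = w * q + w + (4*k*k+8*k+3) * (k.+2))%N by rewrite /x /w qe; ring.
have e2 : (x * q + w = (4*k*k+8*k+3) * (k.+2) + 1)%N by rewrite /x /w qe; ring.
apply/and3P; split.
- by rewrite expf_neq0.
- rewrite -!exprM -!exprD e1 exprD exprM U expr1n mulr1.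
  by rewrite -mulr2n -mulr_natr (pcharf0 h2) mulr0.
- by rewrite -!exprM -!exprD e2 exprD exprM U expr1n mul1r expr1.
Qed.

Lemma PTodd (F : finFieldType) q r : #|F| = (q ^ 2)%N ->
  q = (2 * r + 1)%N -> (0 < r)%N -> (2%:R : F) != 0 ->
  #|[set z : F | Tq q z]| = ((q ^ 2 - 1) %/ 2)%N.
Proof.
move=> hF qe r0 h2.
pose m := (4*r*r + 4*r)%N; pose mh := (2*r*r + 2*r)%N.
have mE : (q ^ 2 - 1 = m)%N.
  rewrite qe -mulnn; have -> : ((2*r+1) * (2*r+1) = m.+1)%N by rewrite /m; ring.
  by rewrite subn1.
have U : forall z : F, z != 0 -> z ^+ m = 1 by move=> z nz; rewrite -mE Punity.
have m0 : (0 < m)%N by rewrite /m; lia.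
have [g gp] : exists g : F, m.-primitive_root g.
  have sz : #|[pred z : F | z != (0 : F)]| = m.
    by rewrite -mE -hF subn1 -(cardC1 (0 : F)); apply: eq_card.
  have H1 : all m.-unity_root (enum [pred z : F | z != (0 : F)]).
    by apply/allP => z; rewrite mem_enum inE => nz; rewrite unity_rootE U.
  have H2 : (m <= size (enum [pred z : F | z != (0%R : F)]))%N by rewrite -cardE sz.
  have /hasP [g _ gp] := has_prim_root m0 H1 (enum_uniq _) H2.
  by exists g.
have gm : g ^+ m = 1 := prim_expr_order gp.
have g0 : g != 0.
  by apply/eqP => g0; move: gm; rewrite g0 expr0n; case: (m) m0 => // n _ /= /eqP; rewrite mulr0n eq_sym oner_eq0.
have gneg : g ^+ mh = -1.
  have E2 : (g ^+ mh) ^+ 2 = 1 by rewrite -exprM (_ : (mh * 2 = m)%N) // /mh /m; ring.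
  have E1 : g ^+ mh != 1.
    rewrite -(expr0 g) (eq_prim_root_expr gp) mod0n modn_small /mh /m; lia.
  have : (g ^+ mh - 1) * (g ^+ mh + 1) = 0 by rewrite -[RHS](subrr (1 : F)) -{3}E2; ring.
  move/eqP; rewrite mulf_eq0 subr_eq0 (negbTE E1) /= addr_eq0 => /eqP //.
have m2 : (m = mh * 2)%N by rewrite /m /mh; ring.
have Tnz : forall a b : F, (a != 0) || (b != 0) -> a ^+ q * a + b ^+ q * b = 0 -> a != 0 /\ b != 0.
  move=> a b nz N; case: (eqVneq a 0) => [a0|an0]; case: (eqVneq b 0) => [b0|bn0] //.
  - by move: nz; rewrite a0 b0 eqxx.
  - move: N; rewrite a0 expr0n mulr0 add0r => /eqP; rewrite mulf_eq0 expf_eq0 (negbTE bn0) /=.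
    by rewrite andbF.
  - move: N; rewrite b0 mulr0 addr0 => /eqP; rewrite mulf_eq0 expf_eq0 (negbTE an0) /=.
    by rewrite andbF.
have q0 : (0 < q)%N by rewrite qe addn1.
have qK : forall x : F, x ^+ q ^+ q = x by apply: PfrobK.
have E : [set z : F | Tq q z] = [set g ^+ (2 * i + r) | i : 'I_mh].
  apply/setP => z; rewrite inE; apply/idP/imsetP.
  - move=> Tz.
    have nz : z != 0 by apply/eqP => z0; move: Tz; rewrite z0 PTq0.
    have [e ze] := prim_rootP gp (U z nz).
    have s1 : z ^+ mh = (-1) ^+ e by rewrite ze -exprM mulnC exprM gneg.
    have s2 : z ^+ mh = (-1) ^+ r.
      move: Tz => /existsP [a /existsP [b /and3P [nz' /eqP N /eqP ez]]].
      have [an0 bn0] := Tnz a b nz' N.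
      set n := a ^+ q * a.
      have nn0 : n != 0 by rewrite mulf_neq0 // expf_neq0.
      have nq : n ^+ q = n by rewrite /n exprMn qK mulrC.
      have n1 : n ^+ (2 * r) = 1.
        apply: (mulIf nn0); rewrite mul1r -exprSr.
        by rewrite (_ : (2 * r).+1 = q)%N // qe addn1.
      have bn : b ^+ q * b = - n by apply/eqP; rewrite -addr_eq0 addrC N.
      rewrite (_ : mh = (q.+1 * r))%N; last by rewrite /mh qe; ring.
      have zq1 : z ^+ q.+1 = - n ^+ 2.
        by rewrite exprSr ez exprMn qK expr2 -mulrN -bn /n; ring.
      by rewrite exprM zq1 -(mulN1r (n ^+ 2)) exprMn -exprM n1 mulr1.
    have par : odd e = odd r.
      move: s1; rewrite s2 -signr_odd -(signr_odd _ e).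
      case: (odd e); case: (odd r) => //= /eqP; rewrite ?expr1 ?expr0.
      + by rewrite -subr_eq0 opprK -mulr2n => /eqP h; move: h2; rewrite h eqxx.
      + by rewrite eq_sym -subr_eq0 opprK -mulr2n => /eqP h; move: h2; rewrite h eqxx.
    have eo := odd_double_half e; have ro := odd_double_half r.
    have elt : (e < m)%N := ltn_ord e.
    rewrite par -!muln2 in eo ro.
    case: (leqP r e) => re.
    + have ilt : (e./2 - r./2 < mh)%N by lia.
      exists (Ordinal ilt) => //; rewrite ze /=; congr (g ^+ _); lia.
    + have ilt : (e./2 + mh - r./2 < mh)%N by lia.
      exists (Ordinal ilt) => //; rewrite ze /= -(prim_expr_mod gp).
      rewrite -[in RHS](prim_expr_mod gp); congr (g ^+ _).
      rewrite (_ : (2 * (e./2 + mh - r./2) + r = 1 * m + e)%N); last by lia.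
      by rewrite modnMDl.
  - move=> [i _ ->].
    apply/existsP; exists (g ^+ i); apply/existsP; exists (g ^+ (i + r + 2 * r * q * i)).
    apply/and3P; split.
    + by rewrite expf_neq0.
    + rewrite -!exprM -!exprD.
      rewrite (_ : ((i + r + 2 * r * q * i) * q + (i + r + 2 * r * q * i)) = (i * q + i) + mh + m * (q * i))%N; last first.
        by rewrite /mh /m qe; ring.
      by rewrite (exprD g (i * q + i + mh)) (exprD g (i * q + i) mh) exprM gm expr1n mulr1 gneg mulrN1 ?(exprD g (i * q) i) subrr.
    + rewrite -!exprM -!exprD.
      rewrite (_ : (i * q + (i + r + 2 * r * q * i)) = (2 * i + r) + m * i)%N; last first.
        by rewrite /m qe; ring.
      by rewrite (exprD g (2 * i + r)) exprM gm expr1n mulr1.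
rewrite E card_imset ?card_ord; last first.
  move=> i j /eqP; rewrite (eq_prim_root_expr gp) eqn_modDr !modn_small; last 2 first.
  - have := ltn_ord j; lia.
  - have := ltn_ord i; lia.
  move=> /eqP ij; apply: val_inj => /=; lia.
by rewrite mE m2 mulnK.
Qed.

Unset Implicit Arguments. Set Strict Implicit.

Theorem proposition2 (F : finFieldType) (q : nat)
  (hq : exists p k : nat, [/\ prime p, (0 < k)%N & q = (p ^ k)%N])
  (hF : #|F| = (q ^ 2)%N)
  (M : 'M[F]_2) (c : F) (u : 'cV[F]_2)
  (huniq : forall a : F, is_eigenvalue M a <-> a = c)
  (hu0 : u != 0)
  (heig : forall v : 'cV[F]_2, M *m v = c *: v <-> exists a : F, v = a *: u)
  (hnorm : herm q u u != 0) :
  [/\ 0 \notin Num0 q M,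
      ~~ odd q -> Num0 q M = [set x : F | x != 0]
    & odd q -> #|Num0 q M| = ((q ^ 2 - 1) %/ 2)%N].
Proof.
have [p [k [pp k0 qe]]] := hq.
have [pc hn] := @Ppnat_q F q p k pp k0 qe hF.
have q0 : (0 < q)%N by rewrite qe expn_gt0 prime_gt0.
have [kk k0' Hred] := Preduce hn hF q0 huniq hu0 heig hnorm.
have oq : odd q = odd p by rewrite qe oddX eqn0Ngt k0.
have p2 : (2 <= p)%N by apply: prime_gt1.
have q2 : (2 <= q)%N.
  by rewrite qe (leq_trans p2) // -{1}(expn1 p) leq_exp2l.
split.
- by rewrite Hred mul0r PTq0.
- move=> ev.
  have pe : p = 2%N by case: (even_prime pp) => // op; move: ev; rewrite oq op.
  have eo := odd_double_half q; rewrite (negbTE ev) add0n -muln2 in eo.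
  apply/setP => y; rewrite inE Hred; case: (eqVneq y 0) => [->|ny]; first by rewrite mul0r PTq0.
  apply: (@PTeven F q (q./2 - 1)).
  + by rewrite pe in pc.
  + by rewrite hF.
  + lia.
  + by rewrite mulf_neq0 // invr_neq0.
- move=> od.
  have eo := odd_double_half q; rewrite od -muln2 in eo.
  have h2 : (2%:R : F) != 0.
    rewrite -(dvdn_pcharf pc) dvdn_prime2 //; apply/eqP => pe; move: od; by rewrite oq pe.
  have -> : Num0 q M = (fun y => y / kk) @^-1: [set z : F | Tq q z].
    by apply/setP => y; rewrite Hred !inE.
  rewrite card_preimset; last exact: (mulIf (invr_neq0 k0')).
  apply: (@PTodd F q (q./2)) => //; lia.
Qed.
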